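(* Let $K\in\{\mathbb R,\mathbb C,\mathbb H\}$ and let $(E,d)$ be a metric vector space over $K$ such that $d$ is asymptotically multiplicative, unbounded on every non-trivial linear subspace, and such that for every $C_1>1$ there exists $C_0\ge0$ with $d\big(\sum_{i=1}^n x_i,\sum_{i=1}^n y_i\big)\le C_1\sum_{i=1}^n d(x_i,y_i)+nC_0$ for all $n\ge2$ and $x_1,\dots,x_n,y_1,\dots,y_n\in E$. Let $d_0(x,y)=\int_{\mathbb U}d(ux,uy)\,d\mu(u)$. Then for all $x,y\in E$ the limit $\lim_{n\to+\infty}\frac1n d_0(nx,ny)$ exists.
   Context: A metric vector space is a topological vector space over $K$ whose topology is generated by the metric $d$. $\mathbb U=\{u\in K:|u|=1\}$, $\mu$ the right-invariant Haar probability measure on $\mathbb U$. $d$ is asymptotically multiplicative if for every $C_1>1$ there exist $C_2,C_3\ge0$ with $C_1^{-1}|\lambda|d(x,y)-C_2|\lambda|-C_3\le d(\lambda x,\lambda y)\le C_1|\lambda|d(x,y)+C_2|\lambda|+C_3$ for all $\lambda\in K$, $x,y\in E$. *)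

(* Defs.v *)
From mathcomp Require Import all_boot all_order all_algebra all_classical all_reals all_analysis.
Import Order.TTheory GRing.Theory Num.Theory numFieldNormedType.Exports.
Set Implicit Arguments. Unset Strict Implicit. Unset Printing Implicit Defensive.
Local Open Scope ring_scope.
Local Open Scope classical_set_scope.

(** A quaternion a0 + a1 i + a2 j + a3 k is represented as ((a0,a1),(a2,a3)),
    i.e. as an element of R^4 = (R*R)*(R*R); this type carries the product
    (= Borel) sigma-algebra of R^4 from MathComp-Analysis. R and C are the
    real subalgebras {a1=a2=a3=0} and {a2=a3=0}. *)
Definition quat (R : realType) := ((R * R) * (R * R))%type.

Section Quat.
Variable R : realType.
Implicit Types a b : quat R.

Definition Q (a0 a1 a2 a3 : R) : quat R := ((a0, a1), (a2, a3)).
Definition qc0 a := a.1.1.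
Definition qc1 a := a.1.2.
Definition qc2 a := a.2.1.
Definition qc3 a := a.2.2.

Definition qadd a b := Q (qc0 a + qc0 b) (qc1 a + qc1 b) (qc2 a + qc2 b) (qc3 a + qc3 b).
Definition qsub a b := Q (qc0 a - qc0 b) (qc1 a - qc1 b) (qc2 a - qc2 b) (qc3 a - qc3 b).
Definition qmul a b :=
  Q (qc0 a * qc0 b - qc1 a * qc1 b - qc2 a * qc2 b - qc3 a * qc3 b)
    (qc0 a * qc1 b + qc1 a * qc0 b + qc2 a * qc3 b - qc3 a * qc2 b)
    (qc0 a * qc2 b - qc1 a * qc3 b + qc2 a * qc0 b + qc3 a * qc1 b)
    (qc0 a * qc3 b + qc1 a * qc2 b - qc2 a * qc1 b + qc3 a * qc0 b).
Definition qreal (r : R) : quat R := Q r 0 0 0.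
Definition qone : quat R := qreal 1.
Definition qnorm a : R :=
  Num.sqrt (qc0 a ^+ 2 + qc1 a ^+ 2 + qc2 a ^+ 2 + qc3 a ^+ 2).
End Quat.

Inductive Kind := KR | KC | KH.

Definition inK (R : realType) (k : Kind) (a : quat R) : Prop :=
  match k with
  | KR => qc1 a = 0 /\ qc2 a = 0 /\ qc3 a = 0
  | KC => qc2 a = 0 /\ qc3 a = 0
  | KH => True
  end.

Definition Uset (R : realType) (k : Kind) : set (quat R) :=
  [set u | inK k u /\ qnorm u = 1].

(** mu is the right-invariant Haar probability measure on U
    (viewed as a Borel measure on H = R^4 concentrated on U). *)
Definition is_Haar_U (R : realType) (k : Kind)
    (mu : {measure set (quat R) -> \bar R}) : Prop :=
  [/\ mu setT = 1%E, mu (Uset k) = 1%E &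
      forall u, Uset k u -> forall A, measurable A ->
        mu [set v | A (qmul v u)] = mu A].

Section MetricVS.
Variables (R : realType) (k : Kind) (E : zmodType).
(** sm is the (left) scalar multiplication K x E -> E; only its values on
    scalars in K are relevant. *)
Variables (sm : quat R -> E -> E) (d : E -> E -> R).

Definition is_metric : Prop :=
  [/\ forall x y, d x y = 0 <-> x = y,
      forall x y, d x y = d y x &
      forall x y z, d x z <= d x y + d y z].

Definition is_K_vector_space : Prop :=
  [/\ forall a x y, inK k a -> sm a (x + y) = sm a x + sm a y,
      forall a b x, inK k a -> inK k b -> sm (qadd a b) x = sm a x + sm b x,
      forall a b x, inK k a -> inK k b -> sm (qmul a b) x = sm a (sm b x) &
      forall x, sm (qone R) x = x].

Definition add_continuous : Prop :=
  forall x0 y0 (eps : R), 0 < eps -> exists2 delta : R, 0 < delta &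
    forall x y, d x x0 < delta -> d y y0 < delta -> d (x + y) (x0 + y0) < eps.

Definition smul_continuous : Prop :=
  forall a0 x0 (eps : R), inK k a0 -> 0 < eps -> exists2 delta : R, 0 < delta &
    forall a x, inK k a -> qnorm (qsub a a0) < delta -> d x x0 < delta ->
      d (sm a x) (sm a0 x0) < eps.

Definition metric_vector_space : Prop :=
  [/\ is_metric, is_K_vector_space, add_continuous & smul_continuous].

Definition asymptotically_multiplicative : Prop :=
  forall C1 : R, 1 < C1 -> exists C2 : R, exists C3 : R,
    [/\ 0 <= C2, 0 <= C3 &
    forall a x y, inK k a ->
      C1^-1 * qnorm a * d x y - C2 * qnorm a - C3 <= d (sm a x) (sm a y) /\
      d (sm a x) (sm a y) <= C1 * qnorm a * d x y + C2 * qnorm a + C3].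

Definition is_K_subspace (F : set E) : Prop :=
  [/\ F 0, forall x y, F x -> F y -> F (x + y) &
      forall a x, inK k a -> F x -> F (sm a x)].

Definition unbounded_on_subspaces : Prop :=
  forall F : set E, is_K_subspace F -> (exists x, F x /\ x <> 0) ->
    forall M : R, exists x y, [/\ F x, F y & M < d x y].

Definition sum_condition : Prop :=
  forall C1 : R, 1 < C1 -> exists2 C0 : R, 0 <= C0 &
    forall n : nat, (2 <= n)%N -> forall xs ys : 'I_n -> E,
      d (\sum_(i < n) xs i) (\sum_(i < n) ys i)
        <= C1 * (\sum_(i < n) d (xs i) (ys i)) + n%:R * C0.

Definition d0 (mu : {measure set (quat R) -> \bar R}) (x y : E) : R :=
  fine (\int[mu]_(u in Uset k) (d (sm u x) (sm u y))%:E)%E.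
End MetricVS.

(* Main.v *)
Require Import Defs.
From mathcomp Require Import all_boot all_order all_algebra all_classical all_reals all_analysis.
From mathcomp Require Import ring lra.
Import Order.TTheory GRing.Theory Num.Theory numFieldNormedType.Exports.
Local Open Scope ring_scope.
Local Open Scope classical_set_scope.



Lemma seq_cvg (R : realType) (a : nat -> R) (B B' : R) :
  (forall n, 0 <= a n) -> 0 <= B -> 0 <= B' -> (forall n, a n <= B * n%:R + B') ->
  (forall C, 1 < C -> exists C0, 0 <= C0 /\ forall m q r, (0 < m)%N -> (0 < q)%N -> (r < m)%N ->
     a (q * m + r)%N <= C * (q%:R * a m + a r) + (q.+1)%:R * C0) ->
  cvg ((fun n => n%:R^-1 * a n) @ \oo).
Proof.
move=> a0 B0 B'0 aB Hsum.
set b := fun n => n%:R^-1 * a n.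
have b0 n : 0 <= b n by rewrite /b mulr_ge0 // invr_ge0.
have bB n : (0 < n)%N -> b n <= B + B'.
  move=> n0; have n1 : 1 <= n%:R :> R by rewrite ler1n.
  rewrite /b ler_pdivrMl ?ltr0n //.
  apply: (le_trans (aB n)); nra.
apply/cauchy_cvgP. apply/cauchyP. move=> eps eps0.
set e := eps / 4.
have e0 : 0 < e by rewrite /e divr_gt0.
set Bb := B + B'.
set C := 1 + e / (Bb + 1).
have Bb1 : 0 < Bb + 1 by rewrite /Bb; lra.
have Bb0 : 0 <= Bb by rewrite /Bb; lra.
have C1 : 1 < C by rewrite /C ltrDl divr_gt0.
have CB : (C - 1) * Bb <= e.
  rewrite /C addrAC subrr add0r mulrAC ler_pdivrMr //; nra.
have [C0 [C00 HC]] := Hsum C C1.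
set m0 := (Num.truncn (C0 / e)).+1.
have m0e : C0 <= e * m0%:R.
  have := truncnS_gt (C0 / e); rewrite -/m0 ltr_pdivrMr // => h.
  rewrite mulrC; exact: ltW.
have m0pos : (0 < m0)%N by [].
set Eb := [set b m | m in [set m | (m0 <= m)%N]].
have hinf : has_inf Eb.
  split.
    by exists (b m0); exists m0 => //=.
  exists 0. move=> y [m _ <-]; exact: b0.
set S := inf Eb.
have S0 : 0 <= S.
  by apply: lb_le_inf; [exact: hinf.1 | move=> y [m' _ <-]; exact: b0].
have [_ [m Hm <-] bmS] := inf_adherent e0 hinf.
rewrite -/S in bmS.
have mpos : (0 < m)%N by apply: leq_trans Hm.
set K := B * m%:R + B'.
set N := maxn m (Num.truncn ((C * K + C0) / e)).+1.
exists (S + 2 * e).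
apply: filterS (nbhs_infty_ge N) => n HN.
have nm : (m <= n)%N by apply: leq_trans HN; rewrite leq_maxl.
have npos : (0 < n)%N by apply: leq_trans nm.
have Sbn : S <= b n.
  by apply: (ge_inf hinf.2); exists n => //=; apply: leq_trans nm.
have bnS : b n <= S + 4 * e.
  set q := (n %/ m)%N; set r := (n %% m)%N.
  have qpos : (0 < q)%N by rewrite divn_gt0.
  have rm : (r < m)%N by rewrite ltn_pmod.
  have := HC m q r mpos qpos rm.
  rewrite -(divn_eq n m) -/q -/r => Han.
  have nR : n%:R = q%:R * m%:R + r%:R :> R.
    by rewrite {1}(divn_eq n m) natrD natrM.
  have mR0 : 0 < m%:R :> R by rewrite ltr0n.
  have am : a m = m%:R * b m by rewrite /b mulrA mulfV ?mulr1 ?mul1r // gt_eqF.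
  have bmB : b m <= Bb by apply: bB.
  have h1 : C * b m <= S + 2 * e.
    have : 0 <= (C - 1) * (Bb - b m) by rewrite mulr_ge0 // subr_ge0 // ltW.
    nra.
  have qR0 : 0 <= q%:R :> R by [].
  have rR0 : 0 <= r%:R :> R by [].
  have qm : q%:R * m%:R <= n%:R :> R by rewrite nR lerDl.
  have h2 : C * (q%:R * a m) <= n%:R * (S + 2 * e).
    have -> : C * (q%:R * a m) = q%:R * m%:R * (C * b m) by rewrite am; ring.
    apply: (le_trans (y := q%:R * m%:R * (S + 2 * e))).
      by rewrite ler_wpM2l // mulr_ge0 // ltW.
    by rewrite ler_wpM2r // addr_ge0 // mulr_ge0 // ltW.
  have h3 : q%:R * C0 <= e * n%:R.
    have C0m : C0 <= e * m%:R.
      apply: (le_trans m0e); apply: ler_wpM2l; [exact: ltW e0 | by rewrite ler_nat].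
    apply: (le_trans (y := q%:R * (e * m%:R))); first by rewrite ler_wpM2l.
    by rewrite mulrCA ler_wpM2l // ltW.
  have rK : a r <= K.
    apply: (le_trans (aB r)); rewrite /K lerD2r ler_wpM2l // ler_nat ltnW //.
  have NK : (C * K + C0) / e < n%:R.
    apply: (lt_le_trans (truncnS_gt _)); rewrite ler_nat; apply: leq_trans HN; exact: leq_maxr.
  have h4 : C * K + C0 <= e * n%:R by move: NK; rewrite ltr_pdivrMr // => h; rewrite (mulrC e); exact: ltW.
  rewrite /b ler_pdivrMl ?ltr0n //.
  apply: (le_trans Han).
  have : C * a r <= C * K by apply: ler_wpM2l => //; exact: ltW (lt_trans ltr01 C1).
  rewrite -[q.+1]addn1 natrD.
  nra.
rewrite /ball /=.
have he : eps = 4 * e by rewrite /e; field.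
rewrite ltr_norml; apply/andP; split; lra.
Qed.


Lemma le_int_nm d (T : measurableType d) (R : realType) (mu : {measure set T -> \bar R})
  D (f g : T -> \bar R) : (forall x, D x -> (0 <= f x)%E) -> (forall x, D x -> (f x <= g x)%E) ->
  (\int[mu]_(x in D) f x <= \int[mu]_(x in D) g x)%E.
Proof.
move=> f0 fg.
rewrite !ge0_integralE //; last by move=> x Dx; apply: le_trans (f0 x Dx) (fg x Dx).
apply: ereal_sup_le => _ [h hf <-]; exists h => // x.
by apply: le_trans (hf x) _; apply: lee_restrict.
Qed.

Lemma int_bounds d (T : measurableType d) (R : realType) (mu : {measure set T -> \bar R})
  D (f : T -> R) (lo hi : R) : measurable D -> mu D = 1%E ->
  (forall x, D x -> 0 <= f x) -> (forall x, D x -> lo <= f x <= hi) ->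
  lo <= fine (\int[mu]_(x in D) (f x)%:E)%E <= hi.
Proof.
move=> mD muD f0 fb.
have [u Du] : D !=set0.
  apply/set0P/negP => /eqP D0; move: muD; rewrite D0 measure0 => /eqP.
  by rewrite eq_sym onee_eq0.
have hi0 : 0 <= hi by case/andP: (fb u Du) => _; apply: le_trans (f0 u Du).
set I := (\int[mu]_(x in D) (f x)%:E)%E.
have Iup : (I <= hi%:E)%E.
  apply: (le_trans (y := (\int[mu]_(x in D) cst hi%:E x)%E)).
    apply: le_int_nm => x Dx; rewrite lee_fin ?f0 //.
    by case/andP: (fb x Dx).
  by rewrite integral_cst // muD mule1.
have Ilo : ((Num.max lo 0)%:E <= I)%E.
  apply: (le_trans (y := (\int[mu]_(x in D) cst (Num.max lo 0)%:E x)%E)).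
    by rewrite integral_cst // muD mule1.
  apply: le_int_nm => x Dx; rewrite lee_fin ?le_max ?lexx ?orbT //.
  rewrite ge_max f0 // andbT; by case/andP: (fb x Dx).
have Ifin : I = (fine I)%:E.
  rewrite fineK // ge0_fin_numE; first by apply: le_lt_trans Iup _; exact: ltry.
  by apply: le_trans Ilo; rewrite lee_fin le_max lexx orbT.
move: Iup Ilo; rewrite Ifin !lee_fin => Iup Ilo.
rewrite Iup andbT; apply: le_trans Ilo; by rewrite le_max lexx.
Qed.


Lemma mlevel (R : realType) (h : quat R -> R) (c : R) :
  measurable_fun setT h -> measurable [set u | h u = c].
Proof.
move=> mh; have := mh measurableT [set c] (measurable_set1 c).
by rewrite setTI.
Qed.

Lemma mUset (R : realType) (k : Kind) : measurable (Uset k : set (quat R)).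
Proof.
have m0 : measurable_fun setT (@qc0 R).
  exact: measurableT_comp measurable_fst measurable_fst.
have m1 : measurable_fun setT (@qc1 R).
  exact: measurableT_comp measurable_snd measurable_fst.
have m2 : measurable_fun setT (@qc2 R).
  exact: measurableT_comp measurable_fst measurable_snd.
have m3 : measurable_fun setT (@qc3 R).
  exact: measurableT_comp measurable_snd measurable_snd.
set g := fun u : quat R => qc0 u * qc0 u + qc1 u * qc1 u + qc2 u * qc2 u + qc3 u * qc3 u.
have mg : measurable_fun setT g.
  by apply: measurable_realfun.measurable_funD; [apply: measurable_realfun.measurable_funD; [apply: measurable_realfun.measurable_funD|]|];
    apply: measurable_realfun.measurable_funM.
have sq1 : forall s : R, (Num.sqrt s = 1) <-> (s = 1).
  move=> s; split => [Hs|->]; last exact: sqrtr1.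
  have s0 : 0 <= s.
    rewrite leNgt; apply/negP => hs.
    have : Num.sqrt s == 0 by rewrite sqrtr_eq0 ltW.
    by rewrite Hs oner_eq0.
  by rewrite -(sqr_sqrtr s0) Hs expr1n.
have qn u : (qnorm u = 1) <-> (g u = 1).
  by rewrite /qnorm /g -!expr2; apply: sq1.
have -> : Uset k = [set u | inK k u] `&` [set u | g u = 1].
  by apply/seteqP; split => u /= [Ku Nu]; split => //; apply/qn.
apply: measurableI; last exact: mlevel.
case: k => /=.
- apply: measurableI; first exact: mlevel.
  by apply: measurableI; exact: mlevel.
- by apply: measurableI; exact: mlevel.
- exact: measurableT.
Qed.

Lemma inK_qreal (R : realType) k (r : R) : inK k (qreal r).
Proof. by case: k; rewrite /inK /qreal /Q /qc1 /qc2 /qc3. Qed.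

Lemma sum_if (V : nmodType) (q : nat) (u v : V) :
  \sum_(i < q.+1) (if (i < q)%N then u else v) = u *+ q + v.
Proof.
rewrite big_ord_recr /= ltnn; congr (_ + _).
rewrite (eq_bigr (fun _ => u)) ?sumr_const ?card_ord // => i _.
by rewrite ltn_ord.
Qed.

Lemma cvg_close (R : realType) (b c : nat -> R) (l : R) :
  b @ \oo --> l ->
  (forall eps, 0 < eps -> \forall n \near \oo, `|c n - b n| <= eps) ->
  c @ \oo --> l.
Proof.
move=> /cvgrPdist_le hb hc; apply/cvgrPdist_le => eps e0.
have e2 : 0 < eps / 2 by rewrite divr_gt0.
move: (hb _ e2) (hc _ e2); apply: filterS2 => n h1 h2.
have he : eps = eps / 2 + eps / 2 by field.
move: h1 h2; rewrite !ler_norml => /andP[h1 h1'] /andP[h2 h2'].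
apply/andP; split; lra.
Qed.

Theorem proposition8 (R : realType) (k : Kind) (E : zmodType)
    (sm : quat R -> E -> E) (d : E -> E -> R)
    (mu : {measure set (quat R) -> \bar R}) :
  metric_vector_space k sm d ->
  asymptotically_multiplicative k sm d ->
  unbounded_on_subspaces k sm d ->
  sum_condition d ->
  is_Haar_U k mu ->
  forall x y : E, exists l : R,
    (fun n : nat => n%:R^-1 * d0 k sm d mu (sm (qreal n%:R) x) (sm (qreal n%:R) y))
      @ \oo --> l.
Proof.
move=> [[dP dS dT] [smD saD smM sm1] _ _] AM _ SC [_ muU _] x y.
have dge0 u v : 0 <= d u v.
  have := dT u v u; rewrite (dS v u) (proj2 (dP u u) erefl).
  by move=> h; rewrite -(pmulr_rge0 _ (ltr0Sn _ 1)) mulr2n mulrDl mul1r.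
have inKr (r : R) : inK k (qreal r) by apply: inK_qreal.
have qaddr (r s : R) : qadd (qreal r) (qreal s) = qreal (r + s).
  by rewrite /qadd /qreal /Q /qc0 /qc1 /qc2 /qc3 /= !addr0.
have smD' r s z : sm (qreal (r + s)) z = sm (qreal r) z + sm (qreal s) z.
  by rewrite -qaddr saD.
have qnr (r : R) : qnorm (qreal r) = `|r|.
  by rewrite /qnorm /qreal /Q /qc0 /qc1 /qc2 /qc3 /= !expr2 !mul0r !addr0 -expr2 sqrtr_sqr.
have sm0 z : sm (qreal 0) z = 0.
  have : sm (qreal 0) z + sm (qreal 0) z = sm (qreal 0) z + 0.
    by rewrite addr0 -smD' addr0.
  by move/addrI.
have smq q m z : sm (qreal (q * m)%:R) z = sm (qreal m%:R) z *+ q.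
  elim: q => [|q IH]; first by rewrite mul0n mulr0n sm0.
  by rewrite mulSn natrD smD' IH mulrS.
set X := fun n : nat => sm (qreal n%:R) x.
set Y := fun n : nat => sm (qreal n%:R) y.
set a := fun n : nat => d (X n) (Y n).
have [C2 [C3 [C20 C30 HAM]]] := AM 2 (ltr1n _ 2).
set B := 2 * d x y + C2.
have aB n : a n <= B * n%:R + C3.
  have := (HAM (qreal n%:R) x y (inKr _)).2.
  by rewrite qnr ger0_norm // /B => h; apply: (le_trans h); rewrite le_eqVlt; apply/orP; left; apply/eqP; ring.
have B0 : 0 <= B by rewrite /B addr_ge0 // mulr_ge0.
have Hsum : forall C, 1 < C -> exists C0, 0 <= C0 /\ forall m q r, (0 < m)%N -> (0 < q)%N -> (r < m)%N ->
     a (q * m + r)%N <= C * (q%:R * a m + a r) + (q.+1)%:R * C0.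
  move=> C C1; have [C0 C00 HC] := SC C C1; exists C0; split => // m q r _ qpos _.
  set xs := fun i : 'I_q.+1 => if (i < q)%N then X m else X r.
  set ys := fun i : 'I_q.+1 => if (i < q)%N then Y m else Y r.
  have := HC q.+1 qpos xs ys.
  rewrite /xs /ys !sum_if.
  have -> : \sum_(i < q.+1) d (if (i < q)%N then X m else X r) (if (i < q)%N then Y m else Y r)
      = \sum_(i < q.+1) (if (i < q)%N then a m else a r).
    by apply: eq_bigr => i _; case: ifP.
  rewrite sum_if => h.
  rewrite /a /X /Y natrD !smD' !smq (mulr_natl (d _ _)); exact: h.
have [l hl] : exists l : R, (fun n : nat => n%:R^-1 * a n) @ \oo --> l.
  have := @seq_cvg R a B C3 (fun n => dge0 _ _) B0 C30 aB Hsum.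
  by move=> h; eexists; exact: h.
exists l; apply: (@cvg_close R _ _ l hl) => eps e0.
set Bb := B + C3.
have Bb1 : 0 < Bb + 1 by rewrite /Bb; lra.
have Bb0 : 0 <= Bb by rewrite /Bb; lra.
set C' := 1 + eps / (2 * (Bb + 1)).
have C'1 : 1 < C' by rewrite /C' ltrDl divr_gt0 // mulr_gt0.
have CB : (C' - 1) * Bb <= eps / 2.
  rewrite /C' addrAC subrr add0r mulrAC ler_pdivrMr ?mulr_gt0 //.
  rewrite -mulrA ler_pM2l //; lra.
have [C2' [C3' [C2'0 C3'0 H']]] := AM C' C'1.
set K := C2' + C3'.
apply: filterS2 (nbhs_infty_ge 1) (nbhs_infty_ger (2 * K / eps)) => n n1 nK /=.
have hb := @int_bounds _ _ R mu (Uset k) (fun u => d (sm u (X n)) (sm u (Y n)))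
  (C'^-1 * a n - K) (C' * a n + K) (mUset R k) muU (fun u _ => dge0 _ _).
have /andP[Ilo Ihi] : C'^-1 * a n - K <= fine (\int[mu]_(u in Uset k) (d (sm u (X n)) (sm u (Y n)))%:E)%E <= C' * a n + K.
  apply: hb => u [Ku Nu]; have [h1 h2] := H' u (X n) (Y n) Ku.
  rewrite Nu !mulr1 in h1 h2; apply/andP; split; rewrite /K /a; lra.
move: Ilo Ihi.
set I := fine _ => Ilo Ihi.
have -> : d0 k sm d mu (sm (qreal n%:R) x) (sm (qreal n%:R) y) = I by [].
have C'0 : 0 < C' by lra.
have Cinv : 2 - C' <= C'^-1.
  rewrite -(ler_pM2r C'0) mulVf ?gt_eqF //; nra.
have a0 : 0 <= a n by apply: dge0.
have npos : 0 < n%:R :> R by rewrite ltr0n.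
have n1R : 1 <= n%:R :> R by rewrite ler1n.
have an : a n <= Bb * n%:R.
  apply: (le_trans (aB n)); rewrite /Bb; nra.
have h1 : C'^-1 * a n >= (2 - C') * a n by apply: ler_wpM2r.
have h2 : (C' - 1) * a n <= eps / 2 * n%:R.
  apply: (le_trans (y := (C' - 1) * (Bb * n%:R))).
    by apply: ler_wpM2l => //; lra.
  by rewrite mulrA ler_wpM2r // ltW.
have h3 : K <= eps / 2 * n%:R.
  move: nK; rewrite ler_pdivrMr // => h; lra.
rewrite -mulrBr normrM ger0_norm; last by rewrite invr_ge0 ltW.
rewrite ler_pdivrMl //.
rewrite ler_norml; apply/andP; split; nra.
Qed.
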